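(* Let $A$ be a meet-complemented lattice in which $\Box x$ and $\Diamond x$ exist for every $x\in A$, and let $\{a_i: i\in I\}$ be an arbitrary subset of $A$. Then (i) if both $\bigwedge_{i\in I}a_i$ and $\bigwedge_{i\in I}\Box a_i$ exist, then $\bigwedge_{i\in I}\Box a_i=\Box\bigwedge_{i\in I}a_i$; and (ii) if both $\bigvee_{i\in I}a_i$ and $\bigvee_{i\in I}\Diamond a_i$ exist, then $\bigvee_{i\in I}\Diamond a_i=\Diamond\bigvee_{i\in I}a_i$.
   Context: A meet-complemented lattice is a lattice $(L,\le)$ (not necessarily distributive) such that for every $a\in L$ the element $\neg a=\max\{b\in L: a\wedge b\le c\ \text{for all } c\in L\}$ exists; it is bounded with bottom $0$ and top $1$. For $a\in L$, $\Box a=\max\{b\in L: a\vee\neg b=1\}$ and $\Diamond a=\min\{b\in L: \neg a\vee b=1\}$. *)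

(* Defs.v *)
From HB Require Import structures.
From mathcomp Require Import all_boot all_order.
Set Implicit Arguments. Unset Strict Implicit. Unset Printing Implicit Defensive.
Import Order.LTheory.
Local Open Scope order_scope.

Definition is_max {d} {L : porderType d} (P : L -> Prop) (x : L) : Prop :=
  P x /\ forall y, P y -> y <= x.
Definition is_min {d} {L : porderType d} (P : L -> Prop) (x : L) : Prop :=
  P x /\ forall y, P y -> x <= y.

Definition is_inf {d} {L : porderType d} {I : Type} (a : I -> L) (m : L) : Prop :=
  is_max (fun b => forall i, b <= a i) m.
Definition is_sup {d} {L : porderType d} {I : Type} (a : I -> L) (s : L) : Prop :=
  is_min (fun b => forall i, a i <= b) s.

Definition is_neg {d} {L : tbLatticeType d} (a na : L) : Prop :=
  is_max (fun b => forall c, a `&` b <= c) na.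
Definition is_box {d} {L : tbLatticeType d} (neg : L -> L) (a ba : L) : Prop :=
  is_max (fun b => a `|` neg b = \top) ba.
Definition is_diamond {d} {L : tbLatticeType d} (neg : L -> L) (a da : L) : Prop :=
  is_min (fun b => neg a `|` b = \top) da.

(* Main.v *)
Require Import Defs.
From HB Require Import structures.
From mathcomp Require Import all_boot all_order.
Import Order.LTheory.
Local Open Scope order_scope.

Section H.
Context {d : Order.disp_t} {L : tbLatticeType d} {neg box dia : L -> L}
  (hneg : forall x : L, is_neg x (neg x))
  (hbox : forall x : L, is_box neg x (box x))
  (hdia : forall x : L, is_diamond neg x (dia x)).

Lemma topE (x : L) : \top <= x -> x = \top.
Proof. by move=> h; apply: le_anti; rewrite h lex1. Qed.

Lemma negA (x y : L) : x <= y -> neg y <= neg x.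
Proof.
move=> xy; apply: (proj2 (hneg x)) => c.
apply: le_trans (proj1 (hneg y) c).
by rewrite leI2 // lexx.
Qed.

Lemma box_iff (a b : L) : (a `|` neg b = \top) <-> b <= box a.
Proof.
split; first by move=> h; apply: (proj2 (hbox a)).
move=> h; apply: topE; rewrite -(proj1 (hbox a)).
by rewrite leU2 // ?lexx // negA.
Qed.

Lemma dia_iff (a b : L) : (neg a `|` b = \top) <-> dia a <= b.
Proof.
split; first by move=> h; apply: (proj2 (hdia a)).
move=> h; apply: topE; rewrite -(proj1 (hdia a)).
by rewrite leU2 // lexx.
Qed.
End H.

Theorem proposition10 (d : Order.disp_t) (L : tbLatticeType d)
  (neg box dia : L -> L)
  (hneg : forall x : L, is_neg x (neg x))
  (hbox : forall x : L, is_box neg x (box x))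
  (hdia : forall x : L, is_diamond neg x (dia x))
  (I : Type) (a : I -> L) :
  (forall m mb : L, is_inf a m -> is_inf (fun i => box (a i)) mb -> mb = box m) /\
  (forall s sd : L, is_sup a s -> is_sup (fun i => dia (a i)) sd -> sd = dia s).
Proof.
split.
- move=> m mb [hm1 hm2] [hb1 hb2]; apply: le_anti; apply/andP; split.
  + apply/(box_iff hneg hbox); rewrite joinC.
    apply: (proj2 (dia_iff hdia _ _)); apply: hm2 => i.
    apply: (proj1 (dia_iff hdia _ _)); rewrite joinC.
    by apply: (proj2 (box_iff hneg hbox _ _)).
  + apply: hb2 => i; apply: (proj1 (box_iff hneg hbox _ _)).
    apply: topE; rewrite -(proj1 (hbox m)).
    by rewrite leU2 // lexx.
- move=> s sd [hs1 hs2] [hd1 hd2]; apply: le_anti; apply/andP; split.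
  + apply: hd2 => i; apply: (proj1 (dia_iff hdia _ _)).
    apply: topE; rewrite -(proj1 (hdia s)).
    by rewrite leU2 // ?lexx // (negA hneg).
  + apply/(dia_iff hdia); rewrite joinC.
    apply: (proj2 (box_iff hneg hbox _ _)); apply: hs2 => i.
    apply: (proj1 (box_iff hneg hbox _ _)); rewrite joinC.
    by apply: (proj2 (dia_iff hdia _ _)).
Qed.
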